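(* Let $K,L,T$ be positive integers and $(\alpha,\beta)\in\mathcal{A}(K,L,T)$. Then $KL+K+L+2T-1-T\min\{K,L,T\}\le\operatorname{N}(\alpha,\beta)$. Consequently, for $\alpha_{\mathrm p}=(0,1,\ldots,K-1)$, $\alpha_{\mathrm s}=(KL)$, $\beta_{\mathrm p}=(0,K,\ldots,K(L-1))$ and $\beta_{\mathrm s}=(KL)$, the degree table $(\alpha_{\mathrm p},\alpha_{\mathrm s},\beta_{\mathrm p},\beta_{\mathrm s})\in\mathcal{A}(K,L,1)$ has the minimum value of $\operatorname{N}$ among all elements of $\mathcal{A}(K,L,1)$.
   Context: A degree table with parameters $K,L,T$ is a tuple $(\alpha_{\mathrm p},\alpha_{\mathrm s},\beta_{\mathrm p},\beta_{\mathrm s})$ of nonnegative integer vectors of lengths $K,T,L,T$ such that, with $\alpha=(\alpha_{\mathrm p}\mid\alpha_{\mathrm s})$, $\beta=(\beta_{\mathrm p}\mid\beta_{\mathrm s})$ (concatenations): (i) entries of $\alpha$ are distinct; (ii) entries of $\beta$ are distinct; (iii) for every integer $n\in\operatorname{Set}(\alpha_{\mathrm p})+\operatorname{Set}(\beta_{\mathrm p})$ there is a unique $i\in\operatorname{Set}(\alpha)$ and a unique $j\in\operatorname{Set}(\beta)$ with $n=i+j$. $\operatorname{Set}(v)$ is the set of entries of $v$, $A+B=\{a+b:a\in A,b\in B\}$, $\mathcal{A}(K,L,T)$ is the set of degree tables, and $\operatorname{N}(\alpha,\beta)=|\operatorname{Set}(\alpha)+\operatorname{Set}(\beta)|$. 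*)

(* Defs.v *)
From mathcomp Require Import all_boot.
Set Implicit Arguments. Unset Strict Implicit. Unset Printing Implicit Defensive.

(* Vectors of nonnegative integers are represented as seq nat; Set(v) is
   membership in the sequence. *)

Definition sumset (A B : seq nat) : seq nat := [seq a + b | a <- A, b <- B].

Definition Nsum (alpha beta : seq nat) : nat := size (undup (sumset alpha beta)).

Definition degree_table (K L T : nat) (ap a_s bp bs : seq nat) : Prop :=
  size ap = K /\ size a_s = T /\ size bp = L /\ size bs = T /\
  uniq (ap ++ a_s) /\ uniq (bp ++ bs) /\
      (forall n, n \in sumset ap bp ->
        exists i j, [/\ i \in ap ++ a_s, j \in bp ++ bs, n = i + j &
          forall i' j', i' \in ap ++ a_s -> j' \in bp ++ bs -> n = i' + j' ->
            i' = i /\ j' = j]).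

(* Main.v *)
Require Import Defs.
From mathcomp Require Import all_boot zify.
Set Implicit Arguments. Unset Strict Implicit.

Lemma exmin (Y : seq nat) : 0 < size Y -> exists2 y0, y0 \in Y & forall y, y \in Y -> y0 <= y.
Proof.
elim: Y => // y Y IH _.
case: Y IH => [|y' Y] IH.
  exists y; first by rewrite inE.
  by move=> z; rewrite inE => /eqP->.
have [z zin zmin] := IH isT.
case: (leqP y z) => hyz.
  exists y; first by rewrite inE eqxx.
  move=> w; rewrite inE => /orP[/eqP->//|/zmin]; lia.
exists z; first by rewrite inE zin orbT.
move=> w; rewrite inE => /orP[/eqP->|/zmin//]; lia.
Qed.

Lemma cd_sorted (X Y : seq nat) : sorted ltn X -> uniq Y -> 0 < size X -> 0 < size Y ->
  size X + size Y <= (size (undup (sumset X Y))).+1.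
Proof.
move=> sX uY nX nY; have [y0 y0in y0min] := exmin nY.
elim: X sX nX => // x X IH sX _.
case: X IH sX => [|x' X] IH sX.
  rewrite /sumset allpairs_cons /= cats0 undup_id ?size_map //.
  by rewrite map_inj_uniq //; apply: addnI.
have sX' : sorted ltn (x' :: X) by apply: path_sorted sX.
have := IH sX' isT.
have hlt : all (ltn x) (x' :: X) by apply: order_path_min sX; move=> ? ? ?; apply: ltn_trans.
set S' := sumset (x' :: X) Y.
have h2 : size ((x + y0) :: undup S') <= size (undup (sumset [:: x, x' & X] Y)).
  apply: uniq_leq_size.
    rewrite /= undup_uniq andbT mem_undup; apply/negP => /allpairsP [[a b] [/= ain bin e]].
    have := allP hlt a ain; have := y0min b bin; rewrite /=; lia.
  move=> z; rewrite inE mem_undup => /orP[/eqP->|zin].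
    by rewrite mem_undup /sumset allpairs_cons mem_cat map_f.
  by rewrite mem_undup /sumset allpairs_cons mem_cat zin orbT.
move: h2 => /=; lia.
Qed.

Lemma cd (X Y : seq nat) : uniq X -> uniq Y -> 0 < size X -> 0 < size Y ->
  size X + size Y <= (size (undup (sumset X Y))).+1.
Proof.
move=> uX uY nX nY.
have sS : sorted ltn (sort leq X).
  by rewrite ltn_sorted_uniq_leq sort_uniq uX sort_sorted //; apply: leq_total.
have := cd_sorted sS uY.
rewrite size_sort => /(_ nX nY) h; apply: (leq_trans h).
rewrite ltnS; apply: uniq_leq_size; first exact: undup_uniq.
move=> z; rewrite !mem_undup => /allpairsP [[a b] [/= ain bin ->]].
by apply: allpairs_f; rewrite // mem_sort in ain.
Qed.
Lemma combine (P W S : seq nat) : uniq P -> {subset P <= S} -> {subset W <= S} ->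
  (forall w, w \in W -> w \notin P) -> size P + size (undup W) <= size (undup S).
Proof.
move=> uP sP sW dW; rewrite -size_cat; apply: uniq_leq_size.
  rewrite cat_uniq uP undup_uniq andbT /=; apply/hasPn => w; rewrite mem_undup.
  exact: dW.
move=> z; rewrite mem_cat mem_undup mem_undup => /orP[/sP|/sW] //.
Qed.

Lemma union_count (s1 s2 : seq nat) : uniq s1 -> uniq s2 ->
  size s1 + size s2 <= size (undup (s1 ++ s2)) + count (mem s1) s2.
Proof.
move=> u1 u2.
have h : size (s1 ++ filter (predC (mem s1)) s2) <= size (undup (s1 ++ s2)).
  apply: uniq_leq_size.
    rewrite cat_uniq u1 filter_uniq // andbT; apply/hasPn => z.
    by rewrite mem_filter => /andP[].
  by move=> z; rewrite mem_undup !mem_cat mem_filter => /orP[->|/andP[_ ->]]; rewrite ?orbT.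
have := count_predC (mem s1) s2; move: h; rewrite size_cat size_filter.
move=> h1 <-; rewrite addnCA [X in _ <= X]addnC leq_add2l; exact: h1.
Qed.

Lemma count_le1 (p : pred nat) (s : seq nat) : uniq s ->
  (forall a b, a \in s -> b \in s -> p a -> p b -> a = b) -> count p s <= 1.
Proof.
move=> us h; rewrite -size_filter.
have uf : uniq (filter p s) by rewrite filter_uniq.
case E: (filter p s) uf => [|a [|b r]] //= /andP[]; rewrite inE negb_or => /andP[/eqP nab _] _.
exfalso; apply: nab; symmetry.
have : a \in filter p s by rewrite E inE eqxx.
have : b \in filter p s by rewrite E !inE eqxx orbT.
rewrite !mem_filter => /andP[pb bs] /andP[pa as_].
exact: h.
Qed.
Lemma arith K L T n1 n2 n3 c N : 0 < T -> T + (L + T) <= n1.+1 -> K * L + n1 <= N ->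
  (K + T) + T <= n2.+1 -> K * L + n2 <= N -> L + (K + 1) <= n3 + c -> c <= 1 ->
  K * L + n3 <= N ->
  K * L + K + L + 2 * T - 1 - T * minn K (minn L T) <= N.
Proof.
move=> hT h1 h2 h3 h4 h5 h6 h7.
have h8 : K * L + K + L <= N by lia.
have h9 : K * L + L + 2 * T - 1 <= N by lia.
have h10 : K * L + K + 2 * T - 1 <= N by lia.
clear h1 h2 h3 h4 h5 h6 h7.
have hK : K <= T * K by rewrite leq_pmull.
have hL : L <= T * L by rewrite leq_pmull.
have hT2 : 2 * T <= T * T + 1 by nia.
have [e|[e|e]] : minn K (minn L T) = K \/ minn K (minn L T) = L \/ minn K (minn L T) = T by lia.
all: rewrite e; lia.
Qed.

Lemma part1 K L T ap a_s bp bs : 0 < T -> degree_table K L T ap a_s bp bs ->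
  K * L + K + L + 2 * T - 1 - T * minn K (minn L T) <= Nsum (ap ++ a_s) (bp ++ bs).
Proof.
move=> hT [sa [ss [sb [sbs [uA [uB H]]]]]].
have dA : forall z, z \in a_s -> z \notin ap.
  move: uA; rewrite cat_uniq => /and3P[_ /hasPn h _] z /h; by [].
have dB : forall z, z \in bs -> z \notin bp.
  move: uB; rewrite cat_uniq => /and3P[_ /hasPn h _] z /h; by [].
have uas : uniq a_s by move: uA; rewrite cat_uniq => /and3P[].
have uap : uniq ap by move: uA; rewrite cat_uniq => /and3P[].
have ubs : uniq bs by move: uB; rewrite cat_uniq => /and3P[].
have ubp : uniq bp by move: uB; rewrite cat_uniq => /and3P[].
have rep : forall a b i j, a \in ap -> b \in bp -> i \in ap ++ a_s -> j \in bp ++ bs ->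
    a + b = i + j -> i = a /\ j = b.
  move=> a b i j ain bin iin jin e.
  have [i0 [j0 [_ _ _ U]]] := H (a + b) (allpairs_f addn ain bin).
  have ain' : a \in ap ++ a_s by rewrite mem_cat ain.
  have bin' : b \in bp ++ bs by rewrite mem_cat bin.
  have [-> ->] := U a b ain' bin' erefl.
  exact: U.
have notP : forall i j, i \in ap ++ a_s -> j \in bp ++ bs -> (i \in a_s) || (j \in bs) ->
    i + j \notin sumset ap bp.
  move=> i j iin jin hij; apply/negP => /allpairsP [[a b] [/= ain bin e]].
  have [ei ej] := rep a b i j ain bin iin jin (esym e).
  move: hij; rewrite ei ej => /orP[/dA|/dB]; by rewrite ?ain ?bin.
have uP : uniq (sumset ap bp).
  apply: allpairs_uniq => // -[a1 b1] [a2 b2] /allpairsP[[a b] [ain bin [-> ->]]]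
     /allpairsP[[a' b'] [a'in b'in [-> ->]]] /= e.
  have a'' : a' \in ap ++ a_s by rewrite mem_cat a'in.
  have b'' : b' \in bp ++ bs by rewrite mem_cat b'in.
  have [-> ->] := rep a b a' b' ain bin a'' b'' e.
  by [].
have sP : {subset sumset ap bp <= sumset (ap ++ a_s) (bp ++ bs)}.
  move=> z /allpairsP [[a b] [/= ain bin ->]].
  by apply: allpairs_f; rewrite mem_cat ?ain ?bin.
have szP : size (sumset ap bp) = K * L by rewrite size_allpairs sa sb.
have b1 : K * L + size (undup (sumset a_s (bp ++ bs))) <= Nsum (ap ++ a_s) (bp ++ bs).
  rewrite -szP; apply: combine => //.
    move=> z /allpairsP [[a b] [/= ain bin ->]].
    by apply: allpairs_f; rewrite // mem_cat ain orbT.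
  move=> z /allpairsP [[a b] [/= ain bin ->]].
  by apply: (notP a b) => //; rewrite ?mem_cat ?ain ?orbT.
have c1 := cd uas uB.
rewrite ss size_cat sb sbs in c1.
have {}c1 := c1 hT (ltn_addl _ hT).
have b2 : K * L + size (undup (sumset (ap ++ a_s) bs)) <= Nsum (ap ++ a_s) (bp ++ bs).
  rewrite -szP; apply: combine => //.
    move=> z /allpairsP [[a b] [/= ain bin ->]].
    by apply: allpairs_f; rewrite // mem_cat bin orbT.
  move=> z /allpairsP [[a b] [/= ain bin ->]].
  by apply: (notP a b) => //; rewrite ?mem_cat ?bin ?orbT.
have c2 := cd uA ubs.
rewrite sbs size_cat sa ss in c2.
have {}c2 := c2 (ltn_addl _ hT) hT.
have [x xin] : exists x, x \in a_s by case: a_s ss {dA uas notP b1 c1 b2 c2 uA H rep sP} => [|x s] /= ss0; [lia | exists x; rewrite inE eqxx].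
have [y yin] : exists y, y \in bs by case: bs sbs {dB ubs notP b1 c1 b2 c2 uB H rep sP} => [|y s] /= ss0; [lia | exists y; rewrite inE eqxx].
set s1 := [seq x + b | b <- bp].
set s2 := (x + y) :: [seq a + y | a <- ap].
have us1 : uniq s1 by rewrite map_inj_uniq //; apply: addnI.
have us2 : uniq s2.
  rewrite /s2 /= map_inj_uniq ?andbT; last by apply: addIn.
  rewrite uap andbT; apply/negP => /mapP [a ain /eqP]; rewrite eqn_add2r => /eqP e.
  by move: (dA x xin); rewrite e ain.
have c3 := union_count us1 us2.
have cnt : count (mem s1) s2 <= 1.
  rewrite /s2 /=.
  have -> : (x + y \in s1) = false.
    apply/negP => /mapP [b bin /eqP]; rewrite eqn_add2l => /eqP e.
    by move: (dB y yin); rewrite e bin.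
  rewrite add0n count_map; apply: count_le1 => // a1 a2 a1in a2in /=.
  move=> /mapP [b1' b1in e1] /mapP [b2' b2in e2].
  have e : a1 + b2' = a2 + b1' by move: e1 e2; clear; lia.
  have a'' : a2 \in ap ++ a_s by rewrite mem_cat a2in.
  have b'' : b1' \in bp ++ bs by rewrite mem_cat b1in.
  by have [] := rep a1 b2' a2 b1' a1in b2in a'' b'' e.
have b3 : K * L + size (undup (s1 ++ s2)) <= Nsum (ap ++ a_s) (bp ++ bs).
  rewrite -szP; apply: combine => //.
    move=> z; rewrite mem_cat /s2 inE => /orP[/mapP [b bin ->]|/orP[/eqP->|/mapP [a ain ->]]];
    by apply: allpairs_f; rewrite mem_cat ?ain ?bin ?xin ?yin ?orbT.
  move=> z; rewrite mem_cat /s2 inE => /orP[/mapP [b bin ->]|/orP[/eqP->|/mapP [a ain ->]]];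
  by apply: notP; rewrite ?mem_cat ?ain ?bin ?xin ?yin ?orbT.
have e1 : size s1 = L by rewrite size_map.
have e2 : size s2 = K + 1 by rewrite /= size_map sa addn1.
rewrite e1 e2 in c3.
exact: (arith hT c1 b1 c2 b2 c3 cnt b3).
Qed.
Lemma spec_table K L : 0 < K -> 0 < L ->
  degree_table K L 1 (iota 0 K) [:: K * L] [seq K * i | i <- iota 0 L] [:: K * L].
Proof.
move=> hK hL.
split; first by rewrite size_iota.
split; first by [].
split; first by rewrite size_map size_iota.
split; first by [].
split.
  rewrite cat_uniq iota_uniq /= orbF mem_iota andbT; apply/negP => /andP[_ h].
  move: h; nia.
split.
  rewrite cat_uniq /= orbF andbT map_inj_uniq ?iota_uniq /=; last first.
    by move=> i j /eqP; rewrite eqn_mul2l eqn0Ngt hK /= => /eqP.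
  by apply/negP => /mapP [i]; rewrite mem_iota => /andP[_ h] /eqP; rewrite eqn_mul2l eqn0Ngt hK /= => /eqP e; move: h; rewrite e; lia.
move=> n /allpairsP [[a b] [/= ain /mapP [j jin ->] ->]].
move: ain jin; rewrite !mem_iota /= => ha hj.
exists a, (K * j); split.
- by rewrite mem_cat mem_iota ha.
- by rewrite mem_cat map_f // mem_iota hj.
- by [].
move=> i' j'; rewrite !mem_cat mem_iota inE /= => /orP[hi|/eqP ->]; last first.
  move=> _ e; exfalso; move: e; nia.
move=> /orP[/mapP [j2 j2in ->]|]; last first.
  rewrite inE => /eqP -> e; exfalso; move: e; nia.
move: j2in; rewrite mem_iota /= => hj2 e.
case: (ltngtP j j2) => hjj.
- exfalso; move: e; nia.
- exfalso; move: e; nia.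
- subst j2; split => //; lia.
Qed.

Lemma spec_bound K L : 0 < K -> 0 < L ->
  Nsum (iota 0 K ++ [:: K * L]) ([seq K * i | i <- iota 0 L] ++ [:: K * L]) <= K * L + K + L.
Proof.
move=> hK hL.
have -> : K * L + K + L = size (iota 0 (K * L + K) ++ [seq K * L + K * b | b <- iota 1 L]).
  by rewrite size_cat size_iota size_map size_iota.
apply: uniq_leq_size; first exact: undup_uniq.
move=> z; rewrite mem_undup => /allpairsP [[a b] [/= ain bin ->]].
rewrite mem_cat mem_iota /=.
move: ain; rewrite mem_cat mem_iota inE /= => /orP[ha|/eqP ->];
  move: bin; rewrite mem_cat inE => /orP[/mapP [j]|/eqP ->]; rewrite ?mem_iota.
- move=> hj ->; apply/orP; left; nia.
- apply/orP; left; nia.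
- move=> hj ->; case: j hj => [|j] hj.
    apply/orP; left; rewrite muln0 addn0; lia.
  apply/orP; right; apply/mapP; exists j.+1 => //; rewrite mem_iota; lia.
- apply/orP; right; apply/mapP; exists L => //; rewrite mem_iota; lia.
Qed.

Theorem theorem5 (K L : nat) (hK : 0 < K) (hL : 0 < L) :
  (forall (T : nat) (ap a_s bp bs : seq nat), 0 < T ->
     degree_table K L T ap a_s bp bs ->
     K * L + K + L + 2 * T - 1 - T * minn K (minn L T)
       <= Nsum (ap ++ a_s) (bp ++ bs)) /\
  (degree_table K L 1 (iota 0 K) [:: K * L] [seq K * i | i <- iota 0 L] [:: K * L] /\
   forall ap a_s bp bs : seq nat, degree_table K L 1 ap a_s bp bs ->
     Nsum (iota 0 K ++ [:: K * L]) ([seq K * i | i <- iota 0 L] ++ [:: K * L])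
       <= Nsum (ap ++ a_s) (bp ++ bs)).
Proof.
split; first by move=> T ap a_s bp bs hT; apply: part1.
split; first exact: spec_table.
move=> ap a_s bp bs hd.
have h1 := part1 (ltn0Sn 0) hd.
have h2 := spec_bound hK hL.
have e : minn K (minn L 1) = 1 by lia.
rewrite e in h1; lia.
Qed.
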